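(* Let $\mathcal{G}$ be a groupoid and $K$ a commutative ring with unit. The $K$-SAC $K\mathcal{G}$ has a filtration $\{F_nK\mathcal{G}(p_0,p_1)\}_{n\ge0}$, $p_0,p_1\in\operatorname{Ob}\mathcal{G}$, such that $F_nK\mathcal{G}(q,q)=I\mathcal{G}(q,q)^n$ for all $q$ and $n\ge0$. The filtered $K$-SAC $K\mathcal{G}$ satisfies conditions (C1) and (C4).
   Context: $K\mathcal{G}$ has the same objects as $\mathcal{G}$ and $K\mathcal{G}(p_0,p_1)$ the free $K$-module on $\mathcal{G}(p_0,p_1)$, with bilinearly extended multiplication $\gamma_1\gamma_2:=\gamma_2\circ\gamma_1$. $I\mathcal{G}(q,q)$ is the augmentation ideal (kernel of $\sum a_i\gamma_i\mapsto\sum a_i$) of the group ring $K\mathcal{G}(q,q)$. A filtration on a $K$-SAC $\mathcal{R}$ (a small additive category with $K$-module hom-sets, $K$-bilinear multiplication, and an isomorphism in every non-zero hom-set) is a choice of $K$-submodules $\mathcal{R}(p_0,p_1)=F_0\supset F_1\supset\cdots$ with $F_{n_1}\mathcal{R}(p_0,p_1)\cdot F_{n_2}\mathcal{R}(p_1,p_2)\subset F_{n_1+n_2}\mathcal{R}(p_0,p_2)$. (C1): $\mathcal{R}(q,q)/F_1\mathcal{R}(q,q)\cong K$ for every object $q$. (C4): the multiplication $F_1\mathcal{R}(q,q)^{\otimes n}\to F_n\mathcal{R}(q,q)$ is surjective for every $q$ and $n\ge1$. *)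

(* Defs.v *)
From HB Require Import structures.
From mathcomp Require Import all_boot all_algebra.
From mathcomp Require Import finmap.
From mathcomp.multinomials Require Import monalg.

Set Implicit Arguments.
Unset Strict Implicit.
Unset Printing Implicit Defensive.

Import GRing.Theory.
Local Open Scope ring_scope.

(* Composition is written in diagrammatic order, matching the paper's
   convention gamma1 gamma2 := gamma2 o gamma1:
   gmul g1 g2 : Hom p0 p2 for g1 : Hom p0 p1, g2 : Hom p1 p2.
   Hom-sets carry a choiceType structure (always available classically),
   needed for the free module construction {malg K[Hom p0 p1]}. *)
Record groupoid := Groupoid {
  gob : Type;
  ghom : gob -> gob -> choiceType;
  gid : forall p, ghom p p;
  gmul : forall p0 p1 p2, ghom p0 p1 -> ghom p1 p2 -> ghom p0 p2;
  ginv : forall p0 p1, ghom p0 p1 -> ghom p1 p0;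
  gmulA : forall p0 p1 p2 p3 (a : ghom p0 p1) (b : ghom p1 p2) (c : ghom p2 p3),
      gmul a (gmul b c) = gmul (gmul a b) c;
  gmul1g : forall p0 p1 (a : ghom p0 p1), gmul (gid p0) a = a;
  gmulg1 : forall p0 p1 (a : ghom p0 p1), gmul a (gid p1) = a;
  gmulV : forall p0 p1 (a : ghom p0 p1), gmul a (ginv a) = gid p0;
  gmulVg : forall p0 p1 (a : ghom p0 p1), gmul (ginv a) a = gid p1
}.

Notation KG G K p0 p1 := {malg K[@ghom G p0 p1]}.

Section KG.
Variables (G : groupoid) (K : comNzRingType).

Definition KGmul p0 p1 p2 (f : KG G K p0 p1) (g : KG G K p1 p2) : KG G K p0 p2 :=
  \sum_(a <- msupp f) \sum_(b <- msupp g) << f@_a * g@_b *g gmul a b >>.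

Definition KGone q : KG G K q q := << gid q >>.

Definition augmentation q (x : KG G K q q) : K := \sum_(a <- msupp x) x@_a.
Definition augideal q (x : KG G K q q) : Prop := augmentation x = 0.

Definition Ksubmodule p0 p1 (S : KG G K p0 p1 -> Prop) : Prop :=
  S 0 /\ forall (k : K) x y, S x -> S y -> S (k *: x + y).

Fixpoint prodn q (n : nat) (S : KG G K q q -> Prop) (x : KG G K q q) : Prop :=
  match n with
  | 0 => x = KGone q
  | m.+1 => exists y z, S y /\ prodn m S z /\ x = KGmul y z
  end.

Inductive Kspan p0 p1 (S : KG G K p0 p1 -> Prop) : KG G K p0 p1 -> Prop :=
  | Kspan_in x : S x -> Kspan S x
  | Kspan_0 : Kspan S 0
  | Kspan_lin (k : K) x y : Kspan S x -> Kspan S y -> Kspan S (k *: x + y).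

Inductive Addspan p0 p1 (S : KG G K p0 p1 -> Prop) : KG G K p0 p1 -> Prop :=
  | Addspan_in x : S x -> Addspan S x
  | Addspan_0 : Addspan S 0
  | Addspan_add x y : Addspan S x -> Addspan S y -> Addspan S (x + y).

Definition augpow q (n : nat) (x : KG G K q q) : Prop :=
  match n with
  | 0 => True
  | _ => Addspan (prodn n (@augideal q)) x
  end.

Definition is_filtration (F : forall p0 p1, nat -> KG G K p0 p1 -> Prop) : Prop :=
  (forall p0 p1 n, Ksubmodule (F p0 p1 n)) /\
  (forall p0 p1 x, F p0 p1 0 x) /\
  (forall p0 p1 n x, F p0 p1 n.+1 x -> F p0 p1 n x) /\
  (forall p0 p1 p2 n1 n2 x y, F p0 p1 n1 x -> F p1 p2 n2 y ->
      F p0 p2 (n1 + n2) (KGmul x y)).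

(* (C1): R(q,q)/F_1 R(q,q) is isomorphic to K, i.e. there is a K-linear
   surjection R(q,q) -> K with kernel exactly F_1 R(q,q). *)
Definition cond_C1 (F : forall p0 p1, nat -> KG G K p0 p1 -> Prop) : Prop :=
  forall q, exists phi : KG G K q q -> K,
    (forall (k : K) x y, phi (k *: x + y) = k * phi x + phi y) /\
    (forall c : K, exists x, phi x = c) /\
    (forall x, phi x = 0 <-> F q q 1 x).

(* (C4): the multiplication F_1^{(tensor) n} -> F_n is surjective, i.e.
   F_n R(q,q) is the K-span of the products x1 ... xn with xi in F_1. *)
Definition cond_C4 (F : forall p0 p1, nat -> KG G K p0 p1 -> Prop) : Prop :=
  forall q n, (1 <= n)%N -> forall x, F q q n x ->
    Kspan (prodn n (F q q 1)) x.

End KG.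

(* Main.v *)
Require Import Defs.
From mathcomp Require Import all_boot all_algebra finmap.
From mathcomp.multinomials Require Import monalg.
Set Implicit Arguments.
Unset Strict Implicit.
Unset Printing Implicit Defensive.
Import GRing.Theory.
Local Open Scope fset_scope.
Local Open Scope ring_scope.

Section Alg.
Variables (G : groupoid) (K : comNzRingType).
Local Notation H := (@ghom G).
Local Notation KT p0 p1 := {malg K[H p0 p1]}.

Lemma KGmulw p0 p1 p2 (d1 : {fset H p0 p1}) (d2 : {fset H p1 p2})
  (f : KT p0 p1) (g : KT p1 p2) : msupp f `<=` d1 -> msupp g `<=` d2 ->
  KGmul f g = \sum_(a <- d1) \sum_(b <- d2) << f@_a * g@_b *g gmul a b >>.
Proof.
move=> le_d1 le_d2; rewrite /KGmul (big_fset_incl _ le_d1) /=.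
  apply/eq_bigr=> k1 _; apply/big_fset_incl => // k _ /mcoeff_outdom ->.
  by rewrite mulr0 monalgU0.
move=> k _ /mcoeff_outdom g1k.
by rewrite big1 => // k' _; rewrite g1k mul0r monalgU0.
Qed.

Lemma KGmulUU p0 p1 p2 c1 c2 (a : H p0 p1) (b : H p1 p2) :
  KGmul << c1 *g a >> << c2 *g b >> = << c1 * c2 *g gmul a b >> :> KT p0 p2.
Proof. by rewrite (KGmulw msuppU_le msuppU_le) !big_seq_fset1 !mcoeffUU. Qed.

Lemma KGmul0g p0 p1 p2 (g : KT p1 p2) : KGmul (0 : KT p0 p1) g = 0.
Proof. by rewrite /KGmul msupp0 big_seq_fset0. Qed.

Lemma KGmulg0 p0 p1 p2 (g : KT p0 p1) : KGmul g (0 : KT p1 p2) = 0.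
Proof. by rewrite /KGmul msupp0; apply: big1 => *; rewrite big_seq_fset0. Qed.

Lemma KGmulDl p0 p1 p2 (g1 g2 : KT p0 p1) (g : KT p1 p2) :
  KGmul (g1 + g2) g = KGmul g1 g + KGmul g2 g.
Proof.
rewrite [in RHS](@KGmulw _ _ _ _ _ _ _ (fsubsetUl _ (msupp g2)) (fsubset_refl _)).
rewrite [in RHS](@KGmulw _ _ _ _ _ _ _ (fsubsetUr (msupp g1) _) (fsubset_refl _)).
rewrite (KGmulw (msuppD_le _ _) (fsubset_refl _)).
rewrite -big_split /=; apply/eq_bigr=> k1 _.
rewrite -big_split /=; apply/eq_bigr=> k2 _.
by rewrite mcoeffD mulrDl monalgUD.
Qed.

Lemma KGmulDr p0 p1 p2 (g : KT p0 p1) (g1 g2 : KT p1 p2) :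
  KGmul g (g1 + g2) = KGmul g g1 + KGmul g g2.
Proof.
rewrite [in RHS](@KGmulw _ _ _ _ _ _ _ (fsubset_refl _) (fsubsetUl _ (msupp g2))).
rewrite [in RHS](@KGmulw _ _ _ _ _ _ _ (fsubset_refl _) (fsubsetUr (msupp g1) _)).
rewrite (KGmulw (fsubset_refl _) (msuppD_le _ _)).
rewrite -big_split /=; apply/eq_bigr=> k1 _.
rewrite -big_split /=; apply/eq_bigr=> k2 _.
by rewrite mcoeffD mulrDr monalgUD.
Qed.

Lemma scaleU p0 p1 (k c : K) (a : H p0 p1) : k *: << c *g a >> = << k * c *g a >>.
Proof. by apply/malgP => b; rewrite mcoeffZ !mcoeffU mulrnAr. Qed.

Lemma KGmulZl p0 p1 p2 k (g1 : KT p0 p1) (g : KT p1 p2) :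
  KGmul (k *: g1) g = k *: KGmul g1 g.
Proof.
rewrite (KGmulw (msuppZ_le _ _) (fsubset_refl _)) /KGmul scaler_sumr.
apply/eq_bigr=> k1 _; rewrite scaler_sumr; apply/eq_bigr=> k2 _.
by rewrite scaleU mcoeffZ mulrA.
Qed.

Lemma KGmulZr p0 p1 p2 k (g : KT p0 p1) (g1 : KT p1 p2) :
  KGmul g (k *: g1) = k *: KGmul g g1.
Proof.
rewrite (KGmulw (fsubset_refl _) (msuppZ_le _ _)) /KGmul scaler_sumr.
apply/eq_bigr=> k1 _; rewrite scaler_sumr; apply/eq_bigr=> k2 _.
by rewrite scaleU mcoeffZ mulrCA.
Qed.

Lemma KGmulEl1 p0 p1 p2 (g1 : KT p0 p1) (g2 : KT p1 p2) :
  KGmul g1 g2 = \sum_(k1 <- msupp g1) KGmul << g1@_k1 *g k1 >> g2.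
Proof.
apply/eq_bigr=> k _; rewrite (KGmulw msuppU_le (fsubset_refl _)) big_seq_fset1.
by apply/eq_bigr => k' _; rewrite mcoeffUU.
Qed.

Lemma KGmulEr1 p0 p1 p2 (g1 : KT p0 p1) (g2 : KT p1 p2) :
  KGmul g1 g2 = \sum_(k2 <- msupp g2) KGmul g1 << g2@_k2 *g k2 >>.
Proof.
rewrite [LHS]/KGmul exchange_big; apply/eq_bigr=> k _.
rewrite (KGmulw (fsubset_refl _) msuppU_le) exchange_big big_seq_fset1.
by apply/eq_bigr => k' _; rewrite mcoeffUU.
Qed.

Lemma KGmul_suml p0 p1 p2 I (r : seq I) (F : I -> KT p0 p1) (g : KT p1 p2) :
  KGmul (\sum_(i <- r) F i) g = \sum_(i <- r) KGmul (F i) g.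
Proof. exact: (big_morph (fun x => KGmul x g) (fun x y => KGmulDl x y g) (KGmul0g p0 g)). Qed.

Lemma KGmul_sumr p0 p1 p2 I (r : seq I) (F : I -> KT p1 p2) (g : KT p0 p1) :
  KGmul g (\sum_(i <- r) F i) = \sum_(i <- r) KGmul g (F i).
Proof. exact: (big_morph (KGmul g) (fun x y => KGmulDr g x y) (KGmulg0 p2 g)). Qed.

Lemma KGmulA p0 p1 p2 p3 (g1 : KT p0 p1) (g2 : KT p1 p2) (g3 : KT p2 p3) :
  KGmul g1 (KGmul g2 g3) = KGmul (KGmul g1 g2) g3.
Proof.
rewrite (KGmulEl1 g1 g2) KGmul_suml (KGmulEl1 g1); apply/eq_bigr=> k1 _.
rewrite (KGmulEl1 g2 g3) KGmul_sumr (KGmulEr1 _ g2) KGmul_suml.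
apply/eq_bigr=> k2 _ /=.
rewrite KGmulUU (KGmulEr1 _ g3) KGmul_sumr (KGmulEr1 _ g3).
by apply/eq_bigr=> k3 _; rewrite !KGmulUU mulrA gmulA.
Qed.

Lemma KGmul1g p0 p1 (g : KT p0 p1) : KGmul (KGone K p0) g = g.
Proof.
rewrite /KGone KGmulEr1 [RHS]monalgE; apply/eq_bigr=> k _.
by rewrite KGmulUU mul1r gmul1g.
Qed.

Lemma KGmulg1 p0 p1 (g : KT p0 p1) : KGmul g (KGone K p1) = g.
Proof.
rewrite /KGone KGmulEl1 [RHS]monalgE; apply/eq_bigr=> k _.
by rewrite KGmulUU mulr1 gmulg1.
Qed.

Definition augg p0 p1 (x : KT p0 p1) : K := \sum_(a <- msupp x) x@_a.

Lemma augE q (x : KT q q) : augmentation x = augg x.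
Proof. by []. Qed.

Lemma augw p0 p1 (d : {fset H p0 p1}) (x : KT p0 p1) : msupp x `<=` d ->
  augg x = \sum_(a <- d) x@_a.
Proof.
by move=> le; rewrite /augg (big_fset_incl _ le) // => a _ /mcoeff_outdom.
Qed.

Lemma augD p0 p1 (x y : KT p0 p1) : augg (x + y) = augg x + augg y.
Proof.
rewrite (augw (msuppD_le _ _)) (augw (fsubsetUl _ (msupp y))) (augw (fsubsetUr (msupp x) _)).
by rewrite -big_split; apply/eq_bigr => a _; rewrite mcoeffD.
Qed.

Lemma augZ p0 p1 k (x : KT p0 p1) : augg (k *: x) = k * augg x.
Proof.
rewrite (augw (msuppZ_le _ _)) /augg mulr_sumr.
by apply/eq_bigr => a _; rewrite mcoeffZ.
Qed.

Lemma aug0 p0 p1 : augg (0 : KT p0 p1) = 0.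
Proof. by rewrite /augg msupp0 big_seq_fset0. Qed.

Lemma aug_sum p0 p1 I (r : seq I) (F : I -> KT p0 p1) :
  augg (\sum_(i <- r) F i) = \sum_(i <- r) augg (F i).
Proof. exact: (big_morph (@augg p0 p1) (@augD p0 p1) (@aug0 p0 p1)). Qed.

Lemma augU p0 p1 (c : K) (a : H p0 p1) : augg << c *g a >> = c.
Proof. by rewrite (augw msuppU_le) big_seq_fset1 mcoeffUU. Qed.

Lemma augM p0 p1 p2 (x : KT p0 p1) (y : KT p1 p2) :
  augg (KGmul x y) = augg x * augg y.
Proof.
rewrite /KGmul (@aug_sum p0 p2 _ (msupp x)) [augg x]/augg mulr_suml.
apply/eq_bigr => a _.
rewrite (@aug_sum p0 p2 _ (msupp y)) [augg y]/augg mulr_sumr.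
by apply/eq_bigr => b _; rewrite augU.
Qed.

End Alg.
Section Ideal.
Variables (G : groupoid) (K : comNzRingType).
Local Notation H := (@ghom G).
Local Notation KT p0 p1 := {malg K[H p0 p1]}.

Lemma augidealMl q (x y : KT q q) : augideal y -> augideal (KGmul x y).
Proof. by rewrite /augideal !augE augM -augE => ->; rewrite mulr0. Qed.

Lemma augidealMr q (x y : KT q q) : augideal x -> augideal (KGmul x y).
Proof. by rewrite /augideal !augE augM -augE => ->; rewrite mul0r. Qed.

Lemma prodn_r q m (z y : KT q q) :
  prodn m.+1 (@augideal G K q) z -> prodn m.+1 (@augideal G K q) (KGmul z y).
Proof.
elim: m z => [|m IH] z /= [y1 [z' [h1 [h2 ->]]]].
  exists (KGmul y1 y), (KGone K q); split; first exact: augidealMr.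
  by split => //; rewrite h2 !KGmulg1.
exists y1, (KGmul z' y); split => //; split; last by rewrite KGmulA.
exact: IH.
Qed.

Lemma prodn_l q m (z y : KT q q) :
  prodn m.+1 (@augideal G K q) z -> prodn m.+1 (@augideal G K q) (KGmul y z).
Proof.
move=> /= [y1 [z' [h1 [h2 ->]]]].
exists (KGmul y y1), z'; split; first exact: augidealMl.
by split => //; rewrite KGmulA.
Qed.

Lemma prodn_mul q m n (a b : KT q q) (S : KT q q -> Prop) :
  prodn m S a -> prodn n S b -> prodn (m + n) S (KGmul a b).
Proof.
elim: m a => [|m IH] a /=; first by move=> -> hb; rewrite KGmul1g.
move=> [y1 [z' [h1 [h2 ->]]]] hb.
exists y1, (KGmul z' b); split => //; split; last by rewrite KGmulA.
exact: IH.
Qed.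

Lemma prodn_mono q n (S T : KT q q -> Prop) x :
  (forall y, S y -> T y) -> prodn n S x -> prodn n T x.
Proof.
move=> ST; elim: n x => [|n IH] x //= [y [z [h1 [h2 ->]]]].
by exists y, z; split; [exact: ST | split => //; exact: IH].
Qed.

Lemma Addspan_map p0 p1 p2 p3 (S : KT p0 p1 -> Prop) (T : KT p2 p3 -> Prop)
  (phi : KT p0 p1 -> KT p2 p3) :
  phi 0 = 0 -> (forall x y, phi (x + y) = phi x + phi y) ->
  (forall x, S x -> Addspan T (phi x)) -> forall x, Addspan S x -> Addspan T (phi x).
Proof.
move=> h0 hD hS x; elim => [y /hS //| | y z _ hy _ hz].
  by rewrite h0; exact: Addspan_0.
by rewrite hD; exact: Addspan_add.
Qed.

Lemma augpow_r q n (x y : KT q q) : augpow n x -> augpow n (KGmul x y).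
Proof.
case: n => // n /=; apply: (Addspan_map (phi := fun x => KGmul x y)).
- exact: KGmul0g.
- by move=> *; rewrite KGmulDl.
- by move=> z hz; apply: Addspan_in; apply: prodn_r.
Qed.

Lemma augpow_l q n (x y : KT q q) : augpow n x -> augpow n (KGmul y x).
Proof.
case: n => // n /=; apply: (Addspan_map (phi := fun x => KGmul y x)).
- exact: KGmulg0.
- by move=> *; rewrite KGmulDr.
- by move=> z hz; apply: Addspan_in; apply: prodn_l.
Qed.

Lemma augpow_mul q n1 n2 (x y : KT q q) :
  augpow n1 x -> augpow n2 y -> augpow (n1 + n2) (KGmul x y).
Proof.
case: n1 => [_|n1]; first by rewrite add0n; apply: augpow_l.
case: n2 => [hx _|n2]; first by rewrite addn0; apply: augpow_r.
rewrite /= => hx hy.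
apply: (Addspan_map (phi := fun x => KGmul x y)) hx.
- exact: KGmul0g.
- by move=> *; rewrite KGmulDl.
move=> a ha; apply: (Addspan_map (phi := fun y => KGmul a y)) hy.
- exact: KGmulg0.
- by move=> *; rewrite KGmulDr.
move=> b hb; apply: Addspan_in.
exact: (@prodn_mul q n1.+1 n2.+1 a b _ ha hb).
Qed.

Lemma augpow0 q n : augpow n (0 : KT q q).
Proof. by case: n => //= n; apply: Addspan_0. Qed.

Lemma augpow_lin q n k (x y : KT q q) :
  augpow n x -> augpow n y -> augpow n (k *: x + y).
Proof.
case: n => // n /= hx hy; apply: Addspan_add => //.
apply: (Addspan_map (phi := fun x => k *: x)) hx.
- exact: scaler0.
- by move=> *; rewrite scalerDr.
clear hy; case: n => [|n] z /= [y1 [z' [h1 [h2 ->]]]]; apply: Addspan_in;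
  exists (k *: y1), z'; (split; [by rewrite /augideal augE augZ -augE h1 mulr0 |
  split => //; by rewrite KGmulZl]).
Qed.

Lemma augpow_dec q n (x : KT q q) : augpow n.+1 x -> augpow n x.
Proof.
case: n => // n /=; apply: (Addspan_map (phi := id)) => // z hz.
apply: Addspan_in; move: hz => /= [y [w [hy [hw ->]]]].
move: hw => /= [y' [w' [hy' [hw' ->]]]].
exists (KGmul y y'), w'; split; first exact: augidealMr.
by split => //; rewrite KGmulA.
Qed.

Lemma KGinvR p0 p1 (a : H p0 p1) :
  KGmul << a >> << ginv a >> = KGone K p0 :> KT p0 p0.
Proof. by rewrite KGmulUU mulr1 gmulV. Qed.

Lemma KGinvL p0 p1 (a : H p0 p1) :
  KGmul << ginv a >> << a >> = KGone K p1 :> KT p1 p1.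
Proof. by rewrite KGmulUU mulr1 gmulVg. Qed.

Definition cnj p0 p1 (a : H p0 p1) (z : KT p1 p1) : KT p0 p0 :=
  KGmul (KGmul << a >> z) << ginv a >>.

Lemma augU1 p0 p1 (a : H p0 p1) : augg (<< a >> : KT p0 p1) = 1.
Proof. exact: augU. Qed.

Lemma prodn_cnj p0 p1 (a : H p0 p1) n z :
  prodn n (@augideal G K p1) z -> prodn n (@augideal G K p0) (cnj a z).
Proof.
elim: n z => [|n IH] z /=.
  by move=> ->; rewrite /cnj KGmulg1 KGinvR.
move=> [y [w [hy [hw ->]]]]; exists (cnj a y), (cnj a w); split.
  by rewrite /augideal /cnj !augE !augM augU1 -augE hy mulr0 mul0r.
split; first exact: IH.
rewrite /cnj -!KGmulA; congr (KGmul _ _); congr (KGmul _ _).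
by rewrite [KGmul << ginv a >> _]KGmulA KGinvL KGmul1g.
Qed.

Lemma augpow_cnj p0 p1 (a : H p0 p1) n z :
  augpow n z -> augpow n (cnj a z).
Proof.
case: n => // n /=; apply: (Addspan_map (phi := cnj a)).
- by rewrite /cnj KGmulg0 KGmul0g.
- by move=> *; rewrite /cnj KGmulDr KGmulDl.
- by move=> x hx; apply: Addspan_in; exact: (@prodn_cnj p0 p1 a n.+1 x hx).
Qed.

End Ideal.

Definition Ffil (G : groupoid) (K : comNzRingType) (p0 p1 : gob G) (n : nat)
  (x : KG G K p0 p1) : Prop :=
  forall g : @ghom G p1 p0, augpow n (KGmul x << g >>).

Lemma Ffil_diag (G : groupoid) (K : comNzRingType) (q : gob G) n (x : KG G K q q) :
  Ffil n x <-> augpow n x.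
Proof.
split => [h|h g]; last exact: augpow_r.
by have := h (gid q); rewrite -[<< gid q >>]/(KGone K q) KGmulg1.
Qed.

Lemma aug1_iff (G : groupoid) (K : comNzRingType) (q : gob G) (x : KG G K q q) :
  augmentation x = 0 <-> augpow 1 x.
Proof.
split => [h|] /=.
  apply: Addspan_in; exists x, (KGone K q); split => //; split => //.
  by rewrite KGmulg1.
elim => [y [a [b [ha [-> ->]]]]| | y z _ hy _ hz].
- by rewrite augE augM -augE ha mul0r.
- by rewrite augE aug0.
- by rewrite augE augD -!augE hy hz addr0.
Qed.

Theorem proposition2p1p1 (G : groupoid) (K : comNzRingType) :
  exists F : forall p0 p1 : gob G, nat -> KG G K p0 p1 -> Prop,
    is_filtration F /\
    (forall q n x, F q q n x <-> augpow n x) /\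
    cond_C1 F /\ cond_C4 F.
Proof.
exists (@Ffil G K); split; [|split; [exact: Ffil_diag|split]].
- split; [|split; [|split]].
  + move=> p0 p1 n; split => [g|k x y hx hy g].
      by rewrite KGmul0g; exact: augpow0.
    by rewrite KGmulDl KGmulZl; apply: augpow_lin.
  + by move=> p0 p1 x g.
  + by move=> p0 p1 n x h g; apply: augpow_dec.
  + move=> p0 p1 p2 n1 n2 x y hx hy g.
    have [|/fset0Pn [a _]] := boolP (msupp x == fset0).
      move=> /eqP h0; have -> : x = 0.
        by apply/malgP => b; rewrite mcoeff0 mcoeff_outdom // h0.
      rewrite !KGmul0g; exact: augpow0.
    have -> : KGmul (KGmul x y) << g >> =
      KGmul (KGmul x << ginv a >>) (cnj a (KGmul y << gmul g a >>)).
      have e : << gmul g a >> = KGmul << g >> << a >> :> KG G K p2 p1.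
        by rewrite KGmulUU mulr1.
      rewrite /cnj e.
      rewrite -!KGmulA KGinvR KGmulg1.
      by rewrite [KGmul << ginv a >> _]KGmulA KGinvL KGmul1g.
    apply: augpow_mul; first exact: hx.
    exact/augpow_cnj/hy.
- move=> q; exists (@augmentation G K q); split; [|split].
  + by move=> k x y; rewrite !augE augD augZ.
  + by move=> c; exists << c *g gid q >>; rewrite augE augU.
  + by move=> x; rewrite Ffil_diag; exact: aug1_iff.
- move=> q n hn x /Ffil_diag; case: n hn => // n _ /=.
  elim => [y hy| | y z _ hy _ hz].
  + apply: Kspan_in; apply: (@prodn_mono G K q n.+1 _ _ y _ hy) => y' hy'.
    by apply/Ffil_diag/aug1_iff.
  + exact: Kspan_0.
  + by rewrite -[y]scale1r; apply: Kspan_lin.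
Qed.
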